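(* For a finite graph $G=(V,E)$, the function $$S^B(\mathbf{x})=\frac12\sum_{v\in V}\Big\{\sum_{e\in\partial v}\big(-x_e\ln x_e+(1-x_e)\ln(1-x_e)\big)-2\Big(1-\sum_{e\in\partial v}x_e\Big)\ln\Big(1-\sum_{e\in\partial v}x_e\Big)\Big\}$$ (with $0\ln0=0$) is non-negative and concave on $FM(G)$.
   Context: $\partial v$ denotes the set of edges incident to $v$. $FM(G)=\{\mathbf{x}\in\mathbb{R}^E:x_e\ge0,\ \sum_{e\in\partial v}x_e\le1\ \forall v\in V\}$. *)

(* Defs.v *)
From Stdlib Require Import Reals List Arith.
Open Scope R_scope.

(* A finite simple graph on vertex set V = {0,...,n-1}: a duplicate-free list
   of edges (a,b) with a < b < n.  Edges are indexed by their position
   i < length E in the list; a vector x in R^E is a function nat -> R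
   (only the values at i < length E matter). *)
Definition simple_graph (n : nat) (E : list (nat * nat)) : Prop :=
  NoDup E /\ (forall a b, In (a, b) E -> (a < b)%nat /\ (b < n)%nat).

Fixpoint rsum (m : nat) (f : nat -> R) : R :=
  match m with O => 0 | S k => rsum k f + f k end.

Definition incident (E : list (nat * nat)) (v i : nat) : bool :=
  let (a, b) := nth i E (0%nat, 0%nat) in orb (Nat.eqb a v) (Nat.eqb b v).

Definition sum_at (E : list (nat * nat)) (v : nat) (f : nat -> R) : R :=
  rsum (length E) (fun i => if incident E v i then f i else 0).

Definition xlnx (t : R) : R := if Rle_dec t 0 then 0 else t * ln t.

Definition FM (n : nat) (E : list (nat * nat)) (x : nat -> R) : Prop :=
  (forall i, (i < length E)%nat -> 0 <= x i) /\
  (forall v, (v < n)%nat -> sum_at E v x <= 1).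

Definition SB (n : nat) (E : list (nat * nat)) (x : nat -> R) : R :=
  / 2 * rsum n (fun v =>
      sum_at E v (fun i => - xlnx (x i) + xlnx (1 - x i))
      - 2 * xlnx (1 - sum_at E v x)).

(* Main.v *)
Require Import Defs.
From Stdlib Require Import Reals List Arith.
From Coquelicot Require Import Coquelicot.
From Stdlib Require Import Lra Lia Psatz Classical.
Open Scope R_scope.


Lemma rsum_ext m f g : (forall i, (i < m)%nat -> f i = g i) -> rsum m f = rsum m g.
Proof. induction m; simpl; intros H; auto. rewrite IHm by (intros; apply H; lia). rewrite H by lia. reflexivity. Qed.

Lemma rsum_plus m f g : rsum m (fun i => f i + g i) = rsum m f + rsum m g.
Proof. induction m; simpl; [lra|]. rewrite IHm; lra. Qed.

Lemma rsum_scal m c f : rsum m (fun i => c * f i) = c * rsum m f.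
Proof. induction m; simpl; [lra|]. rewrite IHm; lra. Qed.

Lemma rsum_le m f g : (forall i, (i < m)%nat -> f i <= g i) -> rsum m f <= rsum m g.
Proof. induction m; simpl; intros H; [lra|]. assert (H1 := H m (Nat.lt_succ_diag_r m)).
 assert (rsum m f <= rsum m g) by (apply IHm; intros; apply H; lia). lra. Qed.

Lemma rsum_nonneg m f : (forall i, (i < m)%nat -> 0 <= f i) -> 0 <= rsum m f.
Proof. intros H. replace 0 with (rsum m (fun _ => 0)). apply rsum_le; auto.
 clear H; induction m; simpl; auto. rewrite IHm; lra. Qed.

Lemma rsum_zero m f : (forall i, (i < m)%nat -> f i = 0) -> rsum m f = 0.
Proof. induction m; simpl; intros H; auto. rewrite IHm by (intros; apply H; lia). rewrite H by lia. lra. Qed.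

Lemma rsum_split m f i0 : (i0 < m)%nat ->
  rsum m f = f i0 + rsum m (fun i => if Nat.eqb i i0 then 0 else f i).
Proof. induction m; simpl; intros H; [lia|].
 destruct (Nat.eqb m i0) eqn:E.
 - apply Nat.eqb_eq in E; subst.
   assert (rsum i0 (fun i => if Nat.eqb i i0 then 0 else f i) = rsum i0 f).
   { apply rsum_ext. intros i Hi. destruct (Nat.eqb i i0) eqn:E'; auto. apply Nat.eqb_eq in E'; lia. }
   lra.
 - apply Nat.eqb_neq in E. rewrite IHm by lia. lra. Qed.

Lemma rsum_ge_term m f i0 : (forall i, (i < m)%nat -> 0 <= f i) -> (i0 < m)%nat -> f i0 <= rsum m f.
Proof. intros H Hi. rewrite (rsum_split m f i0 Hi).
 assert (0 <= rsum m (fun i => if Nat.eqb i i0 then 0 else f i)); [|lra].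
 apply rsum_nonneg. intros i Hi'. destruct (Nat.eqb i i0); auto; lra. Qed.

Definition gg (x : R) := x * (1 - x) / (1 - 2 * x).

Lemma gg_alt x : x < /2 -> gg x = x/2 - /4 + /(4*(1-2*x)).
Proof. intros. unfold gg. field. lra. Qed.

Lemma gg_nonneg x : 0 <= x < /2 -> 0 <= gg x.
Proof. intros. unfold gg. apply Rmult_le_pos. nra. left; apply Rinv_0_lt_compat; lra. Qed.

Lemma gg_super a b : 0 <= a -> 0 <= b -> a + b < /2 -> gg a + gg b <= gg (a + b).
Proof. intros. rewrite !gg_alt by lra.
 assert (/(4*(1-2*a)) + /(4*(1-2*b)) <= /4 + /(4*(1-2*(a+b)))); [|lra].
 assert (0 < 1-2*a) by lra. assert (0 < 1-2*b) by lra. assert (0 < 1-2*(a+b)) by lra.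
 set (A := 1-2*a) in *. set (B := 1-2*b) in *. set (C := 1-2*(a+b)) in *.
 assert (C = A + B - 1) by (unfold A, B, C; ring).
 rewrite !Rinv_mult.
 assert (/A + /B <= 1 + /C); [|lra].
 assert (/A = B*C/(A*B*C)) by (field; lra). assert (/B = A*C/(A*B*C)) by (field; lra).
 assert (1 + /C = (A*B*C + A*B)/(A*B*C)) by (field; lra).
 rewrite H6, H7, H8. unfold Rdiv. rewrite <- Rmult_plus_distr_r. apply Rmult_le_compat_r. left; apply Rinv_0_lt_compat.
 apply Rmult_lt_0_compat; try lra; apply Rmult_lt_0_compat; lra.
 rewrite H5. assert (A <= 1) by (unfold A; lra). assert (B <= 1) by (unfold B; lra).
 assert (0 <= (A+B)*((1-A)*(1-B))) by (apply Rmult_le_pos; [lra| apply Rmult_le_pos; lra]). nra. Qed.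

Lemma gg_mono a b : 0 <= a -> a <= b -> b < /2 -> gg a <= gg b.
Proof. intros. rewrite !gg_alt by lra.
 assert (/(4*(1-2*a)) <= /(4*(1-2*b))); [|lra].
 apply Rinv_le_contravar; lra. Qed.

Lemma rsum_gg m p : (forall i, (i < m)%nat -> 0 <= p i) -> rsum m p < /2 ->
  rsum m (fun i => gg (p i)) <= gg (rsum m p).
Proof. induction m; simpl; intros H H2. unfold gg; rewrite Rmult_0_l. unfold Rdiv; lra.
 assert (0 <= rsum m p) by (apply rsum_nonneg; intros; apply H; lia).
 assert (0 <= p m) by (apply H; lia).
 assert (rsum m (fun i => gg (p i)) <= gg (rsum m p)) by (apply IHm; [intros; apply H; lia| lra]).
 pose proof (gg_super (rsum m p) (p m)). lra. Qed.

Lemma titu_step A S W a w : 0 <= S -> 0 <= W -> A*A <= S*W -> 0 <= w -> (a <> 0 -> 0 < w) ->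
  (A + a)*(A + a) <= (S + a*a/w) * (W + w).
Proof. intros HS HW HA Hw Ha. destruct (Req_dec a 0) as [->|Ha0].
 - unfold Rdiv. rewrite !Rmult_0_l. nra.
 - specialize (Ha Ha0). set (b := a / w). assert (a = b * w) by (unfold b; field; lra).
   assert (a*a/w = b*b*w) by (subst b; field; lra). rewrite H0. rewrite H.
   destruct (Req_dec W 0) as [HW0|HW0].
   + subst W. assert (A = 0) by nra. subst A. assert (0 <= S*w) by (apply Rmult_le_pos; lra).
     assert (0 <= b*b*w*w) by (pose proof (Rle_0_sqr (b*w)); unfold Rsqr in *; nra). nra.
   + assert (0 < W) by lra.
     assert (HH1: W*(S - 2*A*b + b*b*W) >= 0).
     { assert (W*(S - 2*A*b + b*b*W) = (b*W - A)*(b*W-A) + (S*W - A*A)) by ring. rewrite H2. pose proof (Rle_0_sqr (b*W-A)). unfold Rsqr in *. lra. }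
     assert (S - 2*A*b + b*b*W >= 0).
     { destruct (Rle_lt_dec 0 (S - 2*A*b + b*b*W)); [lra|]. assert (W*(S - 2*A*b + b*b*W) < 0) by (apply Rmult_pos_neg; lra). lra. }
     assert ((A + b*w)*(A+b*w) = A*A + w*(2*A*b) + b*b*w*w) by ring.
     assert ((S + b*b*w)*(W+w) = S*W + w*(S + b*b*W) + b*b*w*w) by ring.
     assert (w*(2*A*b) <= w*(S+b*b*W)) by (apply Rmult_le_compat_l; lra). lra. Qed.


Lemma titu m a w : (forall i, (i < m)%nat -> 0 <= w i) -> (forall i, (i < m)%nat -> a i <> 0 -> 0 < w i) ->
  rsum m a * rsum m a <= rsum m (fun i => a i * a i / w i) * rsum m w.
Proof. induction m; simpl; intros H1 H2. lra.
 apply titu_step. apply rsum_nonneg. intros i Hi. destruct (Req_dec (a i) 0) as [E|E].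
 rewrite E; unfold Rdiv; rewrite !Rmult_0_l; lra. assert (0 < w i) by (apply H2; auto; lia).
 apply Rmult_le_pos. nra. left; apply Rinv_0_lt_compat; auto.
 apply rsum_nonneg; intros; apply H1; lia. apply IHm; intros; [apply H1|apply H2]; auto; lia.
 apply H1; lia. apply H2; lia. Qed.

Lemma term_small d p : (d <> 0 -> 0 < p < 1) -> (d <> 0 -> p <= /2) -> d*d/(1-p) - d*d/p <= 0.
Proof. intros H1 H2. destruct (Req_dec d 0) as [->|E]. unfold Rdiv; rewrite !Rmult_0_l; lra.
 specialize (H1 E); specialize (H2 E). assert (d*d/(1-p) <= d*d/p); [|lra].
 unfold Rdiv. apply Rmult_le_compat_l. nra. apply Rinv_le_contravar; lra. Qed.

Lemma lemL m p d : (forall i, (i < m)%nat -> 0 <= p i) ->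
  (forall i, (i < m)%nat -> d i <> 0 -> 0 < p i < 1) ->
  rsum m p <= 1 -> rsum m d = 0 ->
  rsum m (fun i => d i * d i / (1 - p i) - d i * d i / p i) <= 0.
Proof. intros Hp Hd Hs Hz.
 destruct (classic (exists i0, (i0 < m)%nat /\ d i0 <> 0 /\ /2 < p i0)) as [[i0 [Hi0 [Hd0 Hp0]]]|Hno].
 2:{ replace 0 with (rsum m (fun _ => 0)) by (clear; induction m; simpl; auto; rewrite IHm; lra).
     apply rsum_le. intros i Hi. apply term_small. auto. intros Hdi.
     destruct (Rle_lt_dec (p i) (/2)); auto. exfalso; apply Hno; eauto. }
 set (F := fun i => d i * d i / (1 - p i) - d i * d i / p i).
 change (rsum m F <= 0).
 set (p' := fun i => if Nat.eqb i i0 then 0 else p i).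
 set (d' := fun i => if Nat.eqb i i0 then 0 else d i).
 assert (Es : rsum m p = p i0 + rsum m p') by (apply rsum_split; auto).
 assert (Ed : rsum m d = d i0 + rsum m d') by (apply rsum_split; auto).
 assert (Ep'0 : forall i, (i < m)%nat -> 0 <= p' i) by (intros; unfold p'; destruct (Nat.eqb i i0); auto; lra).
 assert (Hsp' : rsum m p' <= 1 - p i0) by lra.
 assert (Hp' : forall i, (i < m)%nat -> p' i < /2).
 { intros i Hi. pose proof (rsum_ge_term m p' i Ep'0 Hi). lra. }
 set (w := fun i => gg (p' i)).
 assert (Hw : forall i, (i < m)%nat -> 0 <= w i) by (intros; apply gg_nonneg; split; auto).
 assert (Hwd : forall i, (i < m)%nat -> d' i <> 0 -> 0 < w i).
 { intros i Hi Hne. pose proof (Hp' i Hi) as Hq. unfold w, d', p' in *. destruct (Nat.eqb i i0) eqn:E. lra.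
   destruct (Hd i Hi Hne).
   unfold gg. apply Rmult_lt_0_compat. nra. apply Rinv_0_lt_compat; lra. }
 pose proof (titu m d' w Hw Hwd) as HT.
 assert (Hrw : rsum m w <= gg (1 - p i0)).
 { apply Rle_trans with (gg (rsum m p')). apply rsum_gg; auto. lra.
   apply gg_mono. apply rsum_nonneg; auto. auto. lra. }
 set (S := rsum m (fun i => d' i * d' i / w i)).
 assert (HFS : rsum m F = F i0 - S).
 { rewrite (rsum_split m F i0 Hi0). unfold S.
   assert (rsum m (fun i => if Nat.eqb i i0 then 0 else F i) = - rsum m (fun i => d' i * d' i / w i)); [|lra].
   replace (- rsum m (fun i => d' i * d' i / w i)) with (rsum m (fun i => -1 * (d' i * d' i / w i)))
    by (rewrite rsum_scal; ring).
   apply rsum_ext. intros i Hi. unfold d', w, p', F. destruct (Nat.eqb i i0) eqn:E.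
   unfold Rdiv; ring. destruct (Req_dec (d i) 0) as [D0|D0]. rewrite D0; unfold Rdiv; ring.
   destruct (Hd i Hi D0). pose proof (Hp' i Hi). unfold p' in H1. rewrite E in H1.
   unfold gg. field. repeat split; lra. }
 assert (HS0 : 0 <= S).
 { apply rsum_nonneg. intros i Hi. destruct (Req_dec (d' i) 0) as [D0|D0]. rewrite D0; unfold Rdiv; lra.
   pose proof (Hwd i Hi D0). apply Rmult_le_pos. nra. left; apply Rinv_0_lt_compat; auto. }
 assert (Hrd : rsum m d' = - d i0) by lra.
 rewrite Hrd in HT.
 destruct (Hd i0 Hi0 Hd0) as [Hp1 Hp2].
 assert (Hg0 : 0 < gg (1 - p i0)) by (unfold gg; apply Rmult_lt_0_compat; [nra| apply Rinv_0_lt_compat; lra]).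
 assert (HF0 : F i0 = d i0 * d i0 / gg (1 - p i0)) by (unfold F, gg; field; repeat split; lra).
 assert (F i0 <= S); [|lra].
 rewrite HF0. apply Rmult_le_reg_r with (gg (1 - p i0)); auto.
 unfold Rdiv. rewrite Rmult_assoc, Rinv_l, Rmult_1_r by lra.
 assert (S * rsum m w <= S * gg (1 - p i0)) by (apply Rmult_le_compat_l; auto).
 assert (- d i0 * - d i0 = d i0 * d i0) by ring. fold S in HT. lra. Qed.

Lemma is_derive_eq (f : R -> R) x l l' : l = l' -> is_derive f x l -> is_derive f x l'.
Proof. intros ->; auto. Qed.

Lemma xlnx_bound x : 0 < x < 1 -> x * ln x <= 0 /\ - (x * ln x) <= 2 * sqrt x.
Proof. intros Hx. assert (ln x < 0) by (rewrite <- ln_1; apply ln_increasing; lra).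
 split. nra.
 set (s := sqrt x). assert (Hs : 0 < s) by (apply sqrt_lt_R0; lra).
 assert (Hxs : x = s * s) by (unfold s; rewrite sqrt_sqrt; lra).
 assert (ln x = 2 * ln s) by (rewrite Hxs, ln_mult by lra; ring).
 pose proof (exp_ineq1_le (- ln s)). rewrite exp_Ropp, exp_ln in H1 by lra.
 assert (- ln s <= / s - 1) by lra.
 rewrite H0, Hxs. assert (s * s * (- ln s) <= s * s * (/ s - 1)) by (apply Rmult_le_compat_l; nra).
 assert (s * s * (/ s - 1) = s - s * s) by (field; lra). nra. Qed.

Lemma xlnx_cont x : continuity_pt xlnx x.
Proof.
 destruct (Rtotal_order x 0) as [Hx|[Hx|Hx]].
 - apply continuity_pt_filterlim. apply (continuous_ext_loc _ (fun _ => 0)).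
   apply (filter_imp (fun u => u < 0)). intros y Hy. unfold xlnx. destruct (Rle_dec y 0); auto; lra.
   apply open_lt; auto. unfold xlnx. destruct (Rle_dec x 0); [|lra]. apply continuous_const.
 - subst x. intros eps Heps. exists (Rmin 1 ((eps/2)*(eps/2))). split.
   apply Rmin_pos; nra. intros y [_ Hy]. simpl in *. unfold R_dist in *. rewrite Rminus_0_r in Hy.
   unfold xlnx at 2. destruct (Rle_dec 0 0); [|lra]. rewrite Rminus_0_r.
   unfold xlnx. destruct (Rle_dec y 0). rewrite Rabs_R0; lra.
   assert (Hy1 : Rabs y < 1) by (eapply Rlt_le_trans; [apply Hy| apply Rmin_l]).
   assert (Hy2 : Rabs y < (eps/2)*(eps/2)) by (eapply Rlt_le_trans; [apply Hy| apply Rmin_r]).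
   rewrite Rabs_right in Hy1, Hy2 by lra.
   destruct (xlnx_bound y) as [B1 B2]; [lra|].
   rewrite Rabs_left1 by lra.
   assert (sqrt y < eps / 2). { rewrite <- (sqrt_square (eps/2)) by lra. apply sqrt_lt_1; lra. }
   lra.
 - apply continuity_pt_filterlim. apply (continuous_ext_loc _ (fun y => y * ln y)).
   apply (filter_imp (fun u => 0 < u)). intros y Hy. unfold xlnx. destruct (Rle_dec y 0); auto; lra.
   apply open_gt; auto. apply (continuous_mult (fun y => y) ln). apply continuous_id. apply continuous_ln; auto.
Qed.

Lemma xlnx_derive u : 0 < u -> is_derive xlnx u (ln u + 1).
Proof. intros Hu. apply (is_derive_ext_loc (fun y => y * ln y)).
 apply (filter_imp (fun v => 0 < v)). intros y Hy. unfold xlnx. destruct (Rle_dec y 0); auto; lra.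
 apply open_gt; auto.
 auto_derive. auto. field. lra. Qed.

Lemma lin_pos a c t : 0 <= a -> 0 <= a + c -> c <> 0 -> 0 < t < 1 -> 0 < a + t * c.
Proof. intros. destruct (Req_dec a 0). subst. assert (0 < c) by lra. nra.
 assert (0 <= t*(a+c)) by nra. nra. Qed.

Lemma h_derive a c t : 0 <= a -> 0 <= a + c -> 0 < t < 1 ->
  is_derive (fun t => xlnx (a + t * c)) t (c * (ln (a + t * c) + 1)).
Proof. intros. destruct (Req_dec c 0) as [->|Hc].
 - apply (is_derive_ext (fun _ => xlnx a)). intros t0. change (xlnx a = xlnx (a + t0 * 0)). f_equal; ring.
   eapply is_derive_eq; [|apply is_derive_const]. change (0 = 0 * (ln (a + t * 0) + 1)). ring.
 - pose proof (lin_pos a c t H H0 Hc H1).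
   eapply is_derive_eq; [|apply (is_derive_comp xlnx (fun t => a + t * c) t (ln (a + t * c) + 1) c)].
   reflexivity. apply xlnx_derive; auto.
   auto_derive. auto. ring. Qed.

Lemma dh_derive a c t : 0 <= a -> 0 <= a + c -> 0 < t < 1 ->
  is_derive (fun t => c * (ln (a + t * c) + 1)) t (c * c / (a + t * c)).
Proof. intros. destruct (Req_dec c 0) as [->|Hc].
 - apply (is_derive_ext (fun _ => 0)). intros t0. change (0 = 0 * (ln (a + t0 * 0) + 1)). ring.
   eapply is_derive_eq; [|apply is_derive_const]. change (0 = 0 * 0 / (a + t * 0)). unfold Rdiv; ring.
 - pose proof (lin_pos a c t H H0 Hc H1).
   auto_derive. auto. field. lra. Qed.

Lemma MVT_open (f df : R -> R) a b : a < b -> (forall c, a < c < b -> is_derive f c (df c)) ->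
  (forall c, a <= c <= b -> continuity_pt f c) ->
  exists c, a < c < b /\ f b - f a = df c * (b - a).
Proof. intros Hab Hd Hc.
 set (pr1 := fun c (P : a < c < b) => exist (fun l => derivable_pt_lim f c l) (df c) (proj1 (is_derive_Reals _ _ _) (Hd c P))).
 set (pr2 := fun c (P : a < c < b) => derivable_pt_id c).
 destruct (MVT f id a b pr1 pr2 Hab Hc (fun c _ => derivable_continuous_pt _ _ (derivable_pt_id c))) as [c [P Hm]].
 exists c. split; auto. unfold pr1, pr2 in Hm. simpl in Hm. rewrite derive_pt_id in Hm. unfold id in Hm. lra. Qed.

Lemma concave_1d (G G1 G2 : R -> R) :
  (forall t, 0 <= t <= 1 -> continuity_pt G t) ->
  (forall t, 0 < t < 1 -> is_derive G t (G1 t)) ->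
  (forall t, 0 < t < 1 -> is_derive G1 t (G2 t)) ->
  (forall t, 0 < t < 1 -> G2 t <= 0) ->
  forall t, 0 <= t <= 1 -> t * G 1 + (1 - t) * G 0 <= G t.
Proof. intros Hc H1 H2 H3 t Ht.
 assert (Mono : forall s u, 0 < s -> s < u -> u < 1 -> G1 u <= G1 s).
 { intros s u Hs Hsu Hu. destruct (MVT_open G1 G2 s u Hsu) as [c [Hcc Hm]].
   intros; apply H2; lra. intros c Hcc. apply continuity_pt_filterlim. apply (ex_derive_continuous (K:=R_AbsRing) (V:=R_NormedModule) G1 c).
   eexists; apply H2; lra. assert (G2 c <= 0) by (apply H3; lra). nra. }
 destruct (Req_dec t 0) as [->|Ht0]. lra. destruct (Req_dec t 1) as [->|Ht1]. lra.
 destruct (MVT_open G G1 0 t) as [c1 [Hc1 E1]]. lra. intros; apply H1; lra. intros; apply Hc; lra.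
 destruct (MVT_open G G1 t 1) as [c2 [Hc2 E2]]. lra. intros; apply H1; lra. intros; apply Hc; lra.
 assert (G1 c2 <= G1 c1) by (apply Mono; lra).
 assert (t * G 1 + (1 - t) * G 0 - G t = t * (1 - t) * (G1 c2 - G1 c1)) by nra.
 assert (0 <= t * (1 - t)) by nra. nra. Qed.

Lemma lemL2 m p d p0 d0 : (forall i, (i < m)%nat -> 0 <= p i) ->
  (forall i, (i < m)%nat -> d i <> 0 -> 0 < p i < 1) -> 0 <= p0 -> (d0 <> 0 -> 0 < p0 < 1) ->
  rsum m p + p0 <= 1 -> rsum m d + d0 = 0 ->
  rsum m (fun i => d i * d i / (1 - p i) - d i * d i / p i) + (d0 * d0 / (1 - p0) - d0 * d0 / p0) <= 0.
Proof. intros H1 H2 H3 H4 H5 H6.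
 pose proof (lemL (S m) (fun i => if Nat.eqb i m then p0 else p i) (fun i => if Nat.eqb i m then d0 else d i)) as HL.
 simpl in HL. rewrite Nat.eqb_refl in HL.
 assert (E : forall (f : nat -> R) g, rsum m (fun i => if Nat.eqb i m then g else f i) = rsum m f).
 { intros f g. apply rsum_ext. intros i Hi. destruct (Nat.eqb i m) eqn:E; auto. apply Nat.eqb_eq in E; lia. }
 rewrite !E in HL.
 replace (rsum m (fun i => (if Nat.eqb i m then d0 else d i) * (if Nat.eqb i m then d0 else d i) / (1 - (if Nat.eqb i m then p0 else p i)) -
        (if Nat.eqb i m then d0 else d i) * (if Nat.eqb i m then d0 else d i) / (if Nat.eqb i m then p0 else p i)))
   with (rsum m (fun i => d i * d i / (1 - p i) - d i * d i / p i)) in HL.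
 2:{ apply rsum_ext. intros i Hi. destruct (Nat.eqb i m) eqn:E'; auto. apply Nat.eqb_eq in E'; lia. }
 apply HL; auto.
 - intros i Hi. destruct (Nat.eqb i m) eqn:E'; auto. apply H1. apply Nat.eqb_neq in E'; lia.
 - intros i Hi. destruct (Nat.eqb i m) eqn:E'; auto. apply H2. apply Nat.eqb_neq in E'; lia.
Qed.

Definition sel (b : nat -> bool) (z : nat -> R) i := if b i then z i else 0.

Definition Phi m (b : nat -> bool) (z : nat -> R) :=
  rsum m (fun i => if b i then - xlnx (z i) + xlnx (1 - z i) else 0)
  - 2 * xlnx (1 - rsum m (fun i => if b i then z i else 0)).

Definition VF m (b : nat -> bool) (z : nat -> R) :=
  (forall i, (i < m)%nat -> b i = true -> 0 <= z i) /\ rsum m (fun i => if b i then z i else 0) <= 1.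

Lemma Phi_ext m b z z' : (forall i, (i < m)%nat -> z i = z' i) -> Phi m b z = Phi m b z'.
Proof. intros H. unfold Phi. f_equal. apply rsum_ext; intros i Hi; rewrite H; auto.
 f_equal. f_equal. f_equal. apply rsum_ext; intros i Hi; rewrite H; auto. Qed.

Lemma VF_le1 m b z i : VF m b z -> (i < m)%nat -> b i = true -> z i <= 1.
Proof. intros [H1 H2] Hi Hb. assert (z i <= rsum m (fun i => if b i then z i else 0)); [|lra].
 replace (z i) with ((fun j => if b j then z j else 0) i) by (cbv beta; rewrite Hb; auto).
 apply (rsum_ge_term m (fun j => if b j then z j else 0) i); auto. intros j Hj. destruct (b j) eqn:E; [apply H1|]; auto; lra. Qed.

Lemma is_derive_rsum m (f : nat -> R -> R) df t :
  (forall i, (i < m)%nat -> is_derive (f i) t (df i)) ->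
  is_derive (fun s => rsum m (fun i => f i s)) t (rsum m df).
Proof. induction m; intros H; simpl.
 - eapply is_derive_eq; [|apply (is_derive_const (K:=R_AbsRing) (V:=R_NormedModule) 0)]. reflexivity.
 - apply (is_derive_plus (fun s => rsum m (fun i => f i s)) (f m)).
   apply IHm; intros; apply H; lia. apply H; lia. Qed.

Lemma rsum_cont m (f : nat -> R -> R) t :
  (forall i, (i < m)%nat -> continuity_pt (f i) t) ->
  continuity_pt (fun s => rsum m (fun i => f i s)) t.
Proof. induction m; intros H; simpl.
 - apply continuity_pt_const. intros a b; auto.
 - apply (continuity_pt_plus (fun s => rsum m (fun i => f i s)) (f m)).
   apply IHm; intros; apply H; lia. apply H; lia. Qed.

Lemma h_cont a c t : continuity_pt (fun t => xlnx (a + t * c)) t.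
Proof. apply continuity_pt_filterlim.
 apply (continuous_comp (fun t => a + t * c) xlnx).
 apply (continuous_plus (fun _ => a) (fun t => t * c)). apply continuous_const.
 apply (continuous_mult (fun t => t) (fun _ => c)). apply continuous_id. apply continuous_const.
 apply continuity_pt_filterlim. apply xlnx_cont. Qed.

Lemma div_sq_nonneg Q x : 0 <= x -> 0 <= Q * Q / x.
Proof. intros Hx. destruct (Req_dec x 0) as [->|H]. unfold Rdiv; rewrite Rinv_0; lra.
 apply Rmult_le_pos. nra. left; apply Rinv_0_lt_compat; lra. Qed.

Lemma rsum_sel_nonneg m b z : (forall i, (i < m)%nat -> b i = true -> 0 <= z i) ->
  forall i, (i < m)%nat -> 0 <= (if b i then z i else 0).
Proof. intros H i Hi. destruct (b i) eqn:E; auto. lra. Qed.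

Lemma Phi_concave m b x y t : VF m b x -> VF m b y -> 0 <= t <= 1 ->
  t * Phi m b x + (1 - t) * Phi m b y <= Phi m b (fun i => t * x i + (1 - t) * y i).
Proof. intros Hx Hy Ht.
 set (q := fun i => x i - y i).
 set (Q := rsum m (fun i => if b i then q i else 0)).
 set (R0 := 1 - rsum m (fun i => if b i then y i else 0)).
 set (G := fun s => rsum m (fun i => if b i then - xlnx (y i + s * q i) + xlnx ((1 - y i) + s * (- q i)) else 0)
    - 2 * xlnx (R0 + s * (- Q))).
 set (G1 := fun s => rsum m (fun i => if b i then - (q i * (ln (y i + s * q i) + 1)) + (- q i) * (ln ((1 - y i) + s * (- q i)) + 1) else 0)
    - 2 * ((- Q) * (ln (R0 + s * (- Q)) + 1))).
 set (G2 := fun s => rsum m (fun i => if b i then - (q i * q i / (y i + s * q i)) + (- q i) * (- q i) / ((1 - y i) + s * (- q i)) else 0)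
    - 2 * ((- Q) * (- Q) / (R0 + s * (- Q)))).
 assert (Hlin : forall s, rsum m (fun i => if b i then s * x i + (1 - s) * y i else 0) =
                 rsum m (fun i => if b i then y i else 0) + s * Q).
 { intros s. unfold Q. rewrite <- rsum_scal, <- rsum_plus. apply rsum_ext. intros i Hi.
   unfold q; destruct (b i); ring. }
 assert (EG : forall s, Phi m b (fun i => s * x i + (1 - s) * y i) = G s).
 { intros s. unfold Phi, G. f_equal.
   - apply rsum_ext. intros i Hi. destruct (b i); auto. unfold q.
     f_equal; f_equal; [f_equal|]; ring.
   - f_equal. f_equal. rewrite Hlin. unfold R0; ring. }
 assert (E1 : Phi m b x = G 1) by (rewrite <- EG; apply Phi_ext; intros; ring).
 assert (E0 : Phi m b y = G 0) by (rewrite <- EG; apply Phi_ext; intros; ring).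
 rewrite EG, E1, E0.
 destruct Hx as [Hx0 Hx1]. destruct Hy as [Hy0 Hy1].
 assert (HxL : forall i, (i < m)%nat -> b i = true -> x i <= 1) by (intros; eapply VF_le1; eauto; split; auto).
 assert (HyL : forall i, (i < m)%nat -> b i = true -> y i <= 1) by (intros; eapply VF_le1; eauto; split; auto).
 assert (HR0 : 0 <= R0) by (unfold R0; lra).
 assert (HR1 : 0 <= R0 + - Q).
 { pose proof (Hlin 1). replace (rsum m (fun i => if b i then 1 * x i + (1 - 1) * y i else 0))
     with (rsum m (fun i => if b i then x i else 0)) in H.
   unfold R0; lra. apply rsum_ext; intros i Hi; destruct (b i); ring. }
 apply (concave_1d G G1 G2); auto.
 - intros s _. unfold G. apply continuity_pt_minus.
   + apply (rsum_cont m (fun i s => if b i then - xlnx (y i + s * q i) + xlnx ((1 - y i) + s * (- q i)) else 0)).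
     intros i Hi. destruct (b i). apply continuity_pt_plus. apply continuity_pt_opp. apply h_cont. apply h_cont.
     apply continuity_pt_const. intros u v; auto.
   + apply continuity_pt_mult. apply continuity_pt_const. intros u v; auto. apply h_cont.
 - intros s Hs. unfold G, G1.
   apply (is_derive_minus (fun s => rsum m (fun i => if b i then - xlnx (y i + s * q i) + xlnx ((1 - y i) + s * (- q i)) else 0))
     (fun s => 2 * xlnx (R0 + s * (- Q)))).
   + apply (is_derive_rsum m (fun i s => if b i then - xlnx (y i + s * q i) + xlnx ((1 - y i) + s * (- q i)) else 0)).
     intros i Hi. destruct (b i) eqn:Eb.
     * apply (is_derive_plus (fun s => - xlnx (y i + s * q i)) (fun s => xlnx ((1 - y i) + s * (- q i)))).
       apply (is_derive_opp (fun s => xlnx (y i + s * q i))). apply h_derive; auto.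
       unfold q; specialize (Hx0 i Hi Eb); lra.
       apply h_derive; auto. specialize (HyL i Hi Eb); lra. unfold q; specialize (HxL i Hi Eb); lra.
     * eapply is_derive_eq; [|apply (is_derive_const (K:=R_AbsRing) (V:=R_NormedModule) 0)]. reflexivity.
   + eapply is_derive_eq; [|apply (is_derive_scal (fun s => xlnx (R0 + s * (- Q))) s 2)].
     reflexivity. apply h_derive; auto.
 - intros s Hs. unfold G1, G2.
   apply (is_derive_minus (fun s => rsum m (fun i => if b i then - (q i * (ln (y i + s * q i) + 1)) + (- q i) * (ln ((1 - y i) + s * (- q i)) + 1) else 0))
     (fun s => 2 * ((- Q) * (ln (R0 + s * (- Q)) + 1)))).
   + apply (is_derive_rsum m (fun i s => if b i then - (q i * (ln (y i + s * q i) + 1)) + (- q i) * (ln ((1 - y i) + s * (- q i)) + 1) else 0)).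
     intros i Hi. destruct (b i) eqn:Eb.
     * apply (is_derive_plus (fun s => - (q i * (ln (y i + s * q i) + 1))) (fun s => (- q i) * (ln ((1 - y i) + s * (- q i)) + 1))).
       apply (is_derive_opp (fun s => q i * (ln (y i + s * q i) + 1))). apply dh_derive; auto.
       unfold q; specialize (Hx0 i Hi Eb); lra.
       apply dh_derive; auto. specialize (HyL i Hi Eb); lra. unfold q; specialize (HxL i Hi Eb); lra.
     * eapply is_derive_eq; [|apply (is_derive_const (K:=R_AbsRing) (V:=R_NormedModule) 0)]. reflexivity.
   + eapply is_derive_eq; [|apply (is_derive_scal (fun s => (- Q) * (ln (R0 + s * (- Q)) + 1)) s 2)].
     reflexivity. apply dh_derive; auto.
 - intros s Hs. unfold G2.
   set (P := fun i => if b i then y i + s * q i else 0).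
   set (D := fun i => if b i then q i else 0).
   set (p0 := R0 + s * - Q).
   assert (HP0 : forall i, (i < m)%nat -> 0 <= P i).
   { intros i Hi. unfold P. destruct (b i) eqn:Eb; [|lra]. specialize (Hx0 i Hi Eb); specialize (Hy0 i Hi Eb).
     unfold q. nra. }
   assert (HPD : forall i, (i < m)%nat -> D i <> 0 -> 0 < P i < 1).
   { intros i Hi Hd. unfold P, D in *. destruct (b i) eqn:Eb; [|lra]. split.
     apply lin_pos; auto. unfold q; specialize (Hx0 i Hi Eb); lra.
     assert (0 < (1 - y i) + s * (- q i)); [|lra]. apply lin_pos; auto.
     specialize (HyL i Hi Eb); lra. unfold q; specialize (HxL i Hi Eb); lra. lra. }
   assert (HsP : rsum m P = rsum m (fun i => if b i then y i else 0) + s * Q).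
   { unfold Q. rewrite <- rsum_scal, <- rsum_plus. apply rsum_ext. intros i Hi. unfold P; destruct (b i); ring. }
   assert (Hp0 : 0 <= p0). { unfold p0. nra. }
   assert (Hp0d : - Q <> 0 -> 0 < p0 < 1).
   { intros HQ. split. apply lin_pos; auto. auto.
     assert (exists i, (i < m)%nat /\ D i <> 0) as [i [Hi Hd]].
     { apply NNPP. intros Hne. apply HQ. assert (Q = 0); [|lra]. apply rsum_zero. intros i Hi.
       destruct (Req_dec (if b i then q i else 0) 0); auto. exfalso; apply Hne; exists i; auto. }
     pose proof (HPD i Hi Hd). pose proof (rsum_ge_term m P i HP0 Hi). unfold R0 in p0.
     assert (p0 = 1 - rsum m P) by (unfold p0, R0; rewrite HsP; ring). lra. }
   pose proof (lemL2 m P D p0 (- Q) HP0 HPD Hp0 Hp0d) as HL.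
   assert (Hsum1 : rsum m P + p0 = 1) by (unfold p0, R0; rewrite HsP; ring).
   specialize (HL ltac:(lra) ltac:(unfold Q; fold D; lra)).
   replace (rsum m (fun i => if b i then - (q i * q i / (y i + s * q i)) + - q i * - q i / (1 - y i + s * - q i) else 0))
     with (rsum m (fun i => D i * D i / (1 - P i) - D i * D i / P i)).
   2:{ apply rsum_ext. intros i Hi. unfold D, P. destruct (b i). replace (1 - (y i + s * q i)) with (1 - y i + s * - q i) by ring.
       unfold Rdiv; ring. unfold Rdiv; rewrite Rinv_0; ring. }
   fold p0.
   assert (0 <= rsum m P) by (apply rsum_nonneg; auto).
   assert (0 <= - Q * - Q / (1 - p0)) by (apply div_sq_nonneg; lra).
   assert (0 <= - Q * - Q / p0) by (apply div_sq_nonneg; lra).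
   lra.
Qed.

Lemma xlnx0 : xlnx 0 = 0. Proof. unfold xlnx; destruct (Rle_dec 0 0); lra. Qed.
Lemma xlnx1 : xlnx 1 = 0. Proof. unfold xlnx; destruct (Rle_dec 1 0). lra. rewrite ln_1; ring. Qed.

Lemma Phi_ext_b m b z z' : (forall i, (i < m)%nat -> b i = true -> z i = z' i) -> Phi m b z = Phi m b z'.
Proof. intros H. unfold Phi. f_equal. apply rsum_ext; intros i Hi; destruct (b i) eqn:E; auto; rewrite H; auto.
 f_equal. f_equal. f_equal. apply rsum_ext; intros i Hi; destruct (b i) eqn:E; auto. Qed.

Lemma Phi_nonneg_aux m b k : forall z, VF m b z ->
  (forall i, (k <= i)%nat -> (i < m)%nat -> b i = true -> z i = 0) -> 0 <= Phi m b z.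
Proof. induction k; intros z Hz Hs.
 - rewrite (Phi_ext_b m b z (fun _ => 0)) by (intros; apply Hs; auto; lia).
   unfold Phi. rewrite rsum_zero. rewrite rsum_zero. rewrite Rminus_0_r, xlnx1. lra.
   intros i Hi; destruct (b i); auto. intros i Hi; destruct (b i); auto. rewrite Rminus_0_r, xlnx0, xlnx1; ring.
 - destruct (classic ((k < m)%nat /\ b k = true /\ z k <> 0)) as [[Hk [Hb Hz0]]|Hno].
   2:{ apply IHk; auto. intros i Hi Him Hbi. destruct (Nat.eq_dec i k). subst.
       destruct (Req_dec (z k) 0); auto. exfalso; apply Hno; auto. apply Hs; auto; lia. }
   destruct Hz as [Hz1 Hz2].
   set (lam := z k).
   assert (Hl0 : 0 < lam) by (pose proof (Hz1 k Hk Hb); unfold lam; lra).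
   assert (Hl1 : lam <= 1) by (eapply VF_le1; eauto; split; auto).
   set (ek := fun i => if Nat.eqb i k then 1 else 0).
   set (z2 := fun i => if Nat.eqb i k then 0 else z i / (1 - lam)).
   set (selz := fun i => if b i then z i else 0).
   assert (Hsplit : rsum m selz = lam + rsum m (fun i => if Nat.eqb i k then 0 else selz i)).
   { rewrite (rsum_split m selz k Hk). unfold selz at 1; rewrite Hb; auto. }
   assert (Hrest0 : 0 <= rsum m (fun i => if Nat.eqb i k then 0 else selz i)).
   { apply rsum_nonneg. intros i Hi. unfold selz; destruct (Nat.eqb i k); [lra|]. destruct (b i) eqn:E; [apply Hz1|]; auto; lra. }
   assert (Hrest1 : rsum m (fun i => if Nat.eqb i k then 0 else selz i) <= 1 - lam) by (unfold selz in Hsplit; unfold selz; lra).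
   assert (Hdec : forall i, (i < m)%nat -> b i = true -> z i = lam * ek i + (1 - lam) * z2 i).
   { intros i Hi Hbi. unfold ek, z2. destruct (Nat.eqb i k) eqn:E.
     apply Nat.eqb_eq in E; subst; unfold lam; ring.
     destruct (Req_dec lam 1) as [L1|L1].
     + assert (z i <= rsum m (fun i => if Nat.eqb i k then 0 else selz i)).
       { replace (z i) with ((fun j => if Nat.eqb j k then 0 else selz j) i) by (cbv beta; rewrite E; unfold selz; rewrite Hbi; auto).
         apply (rsum_ge_term m (fun j => if Nat.eqb j k then 0 else selz j) i); auto.
         intros j Hj. unfold selz; destruct (Nat.eqb j k); [lra|]. destruct (b j) eqn:E'; [apply Hz1|]; auto; lra. }
       assert (z i = 0) by (pose proof (Hz1 i Hi Hbi); lra). rewrite H0, L1. ring.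
     + field. lra. }
   rewrite (Phi_ext_b m b z (fun i => lam * ek i + (1 - lam) * z2 i)) by auto.
   assert (VFe : VF m b ek).
   { split. intros i _ _. unfold ek; destruct (Nat.eqb i k); lra.
     rewrite (rsum_split _ _ k Hk). rewrite Hb. unfold ek at 1. rewrite Nat.eqb_refl.
     rewrite rsum_zero. lra. intros i Hi. destruct (Nat.eqb i k) eqn:E; auto. unfold ek; rewrite E; destruct (b i); auto. }
   assert (VF2 : VF m b z2).
   { split. intros i Hi Hbi. unfold z2; destruct (Nat.eqb i k). lra.
     destruct (Req_dec lam 1) as [L1|L1]. rewrite L1, Rminus_diag. unfold Rdiv; rewrite Rinv_0; lra.
     apply Rmult_le_pos; [apply Hz1; auto| left; apply Rinv_0_lt_compat; lra].
     replace (rsum m (fun i => if b i then z2 i else 0)) with (rsum m (fun i => / (1 - lam) * (if Nat.eqb i k then 0 else selz i))).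
     rewrite rsum_scal. destruct (Req_dec lam 1) as [L1|L1]. rewrite L1, Rminus_diag, Rinv_0; lra.
     apply Rle_trans with (/ (1 - lam) * (1 - lam)). apply Rmult_le_compat_l. left; apply Rinv_0_lt_compat; lra. auto.
     rewrite Rinv_l; lra.
     apply rsum_ext. intros i Hi. unfold z2, selz. destruct (Nat.eqb i k); destruct (b i); unfold Rdiv; ring. }
   assert (Pe : Phi m b ek = 0).
   { unfold Phi. rewrite rsum_zero.
     replace (1 - rsum m (fun i => if b i then ek i else 0)) with 0. rewrite xlnx0; ring.
     destruct VFe as [_ _]. rewrite (rsum_split _ _ k Hk). rewrite Hb. unfold ek at 1. rewrite Nat.eqb_refl.
     rewrite rsum_zero. ring. intros i Hi. destruct (Nat.eqb i k) eqn:E; auto. unfold ek; rewrite E; destruct (b i); auto.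
     intros i Hi. unfold ek. destruct (b i); auto. destruct (Nat.eqb i k); rewrite ?Rminus_0_r, ?Rminus_diag, ?xlnx0, ?xlnx1; ring. }
   assert (P2 : 0 <= Phi m b z2).
   { apply IHk; auto. intros i Hi Him Hbi. unfold z2. destruct (Nat.eqb i k) eqn:E; auto.
     apply Nat.eqb_neq in E. rewrite Hs; auto. unfold Rdiv; ring. lia. }
   pose proof (Phi_concave m b ek z2 lam VFe VF2 (conj (Rlt_le _ _ Hl0) Hl1)).
   rewrite Pe in H. assert (0 <= (1 - lam) * Phi m b z2) by (apply Rmult_le_pos; lra). lra.
Qed.

Lemma Phi_nonneg m b z : VF m b z -> 0 <= Phi m b z.
Proof. intros H. apply (Phi_nonneg_aux m b m z H). intros; lia. Qed.

Theorem proposition4 (n : nat) (E : list (nat * nat)) (HG : simple_graph n E) :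
  (forall x, FM n E x -> 0 <= SB n E x) /\
  (forall x y (t : R), FM n E x -> FM n E y -> 0 <= t <= 1 ->
     t * SB n E x + (1 - t) * SB n E y
       <= SB n E (fun i => t * x i + (1 - t) * y i)).
Proof.
 assert (HSB : forall z, SB n E z = / 2 * rsum n (fun v => Phi (length E) (incident E v) z)) by reflexivity.
 assert (HVF : forall z v, FM n E z -> (v < n)%nat -> VF (length E) (incident E v) z).
 { intros z v [H1 H2] Hv. split. intros; apply H1; auto. apply H2; auto. }
 split.
 - intros x Hx. rewrite HSB. apply Rmult_le_pos. lra. apply rsum_nonneg. intros v Hv. apply Phi_nonneg; auto.
 - intros x y t Hx Hy Ht. rewrite !HSB.
   assert (t * rsum n (fun v => Phi (length E) (incident E v) x) + (1 - t) * rsum n (fun v => Phi (length E) (incident E v) y)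
     <= rsum n (fun v => Phi (length E) (incident E v) (fun i => t * x i + (1 - t) * y i))).
   { rewrite <- !rsum_scal, <- rsum_plus. apply rsum_le. intros v Hv. apply Phi_concave; auto. }
   lra.
Qed.
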